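(* Let $(G,k)$ be an instance of Clique and let $(\mathcal{G},k',\ell)$ be the instance of Multistage Vertex Cover produced from $(G,k)$ by the construction described in the context. If $G$ contains a clique of size $k$, then $(\mathcal{G},k',\ell)$ is a yes-instance of Multistage Vertex Cover.
   Context: Multistage Vertex Cover: given a temporal graph $\mathcal{G}$, i.e. a sequence of layers (static graphs) $(G_1,\dots,G_\tau)$ on a common vertex set $V'$, and integers $k'\in\mathbb{N}$, $\ell\in\mathbb{N}_0$, decide whether there is $(S_1,\dots,S_\tau)$ with each $S_i\subseteq V'$ a vertex cover of $G_i$ of size at most $k'$ and $|S_i\triangle S_{i+1}|\le\ell$ for all $i<\tau$ ($\triangle$ = symmetric difference). Construction: let $G=(V,E)$ with $E=\{e_1,\dots,e_m\}$, $m=|E|$, and positive integer $k$. Let $K=\binom{k}{2}$, $k'=2K+k+1$, $\kappa=K+k+3$, $\tau=2m\kappa+1$, and $\ell=2$. The vertex set $V'$ contains $V\cup E$ (each edge of $G$ is also a vertex), the sets $U^t=\{u^t_1,\dots,u^t_K\}$ for $t\in\{1,\dots,\kappa+1\}$, the set $C=\{c_1,\dots,c_{\tau}\}$, and additional new leaf vertices introduced below. The layers $G_1,\dots,G_\tau$ have the following edges: (1) for every odd $i\in\{1,\dots,\tau\}$, in $G_i$ the vertex $c_i$ is the center of a star with $k'+1$ new leaf vertices; (2) for every $j\in\{0,\dots,\kappa\}$, in $G_{2mj+1}$ each vertex of $U^{j+1}$ is the center of a star with $k'+1$ new leaf vertices; (3) for every $j\in\{0,\dots,\kappa-1\}$ and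 $i\in\{1,\dots,2m+1\}$, in $G_{2mj+i}$ the vertex $u^{j+1}_x$ is adjacent to $u^{j+2}_x$ for every $x\in\{1,\dots,K\}$; (4) for every even $i\in\{1,\dots,\tau-1\}$, the edge $\{c_i,c_{i+1}\}$ is present in $G_i$ and in $G_{i+1}$; (5) for every $j\in\{0,\dots,\kappa-1\}$ and $i\in\{1,\dots,m\}$ with $e_i=\{v,w\}$, in $G_{2mj+2i}$ the vertex $c_{2mj+2i}$ is adjacent to the vertices $e_i$, $v$ and $w$. No other edges are present. The output is $(\mathcal{G}=(G_1,\dots,G_\tau),k',\ell)$. *)

(* Defs.v *)
From HB Require Import structures.
From mathcomp Require Import all_boot.
Set Implicit Arguments. Unset Strict Implicit. Unset Printing Implicit Defensive.

Definition is_vc (T : finType) (E : T -> T -> Prop) (S : {set T}) : Prop :=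
  forall a b, E a b -> a \in S \/ b \in S.

Definition symdiff (T : finType) (A B : {set T}) : {set T} :=
  (A :\: B) :|: (B :\: A).

(* (G_1,...,G_tau), k', l is a yes-instance; layers are indexed 1..tau,
   layer i has edge relation L i. *)
Definition mvc_yes (T : finType) (tau : nat) (L : nat -> T -> T -> Prop)
    (kp l : nat) : Prop :=
  exists S : nat -> {set T},
    (forall i, 1 <= i <= tau -> is_vc (L i) (S i) /\ #|S i| <= kp) /\
    (forall i, 1 <= i < tau -> #|symdiff (S i) (S i.+1)| <= l).

(* G has vertex set V and edges e_1,...,e_m, given by ends : 'I_m -> V * V
   (edge e_(i+1) = {(ends i).1, (ends i).2}). *)
Definition simple_edges (V : finType) (m : nat) (ends : 'I_m -> V * V) : Prop :=
  (forall i, (ends i).1 != (ends i).2) /\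
  (forall i j, ends i = ends j \/ ends i = ((ends j).2, (ends j).1) -> i = j).

Definition adj (V : finType) (m : nat) (ends : 'I_m -> V * V) (u v : V) : Prop :=
  exists i, ends i = (u, v) \/ ends i = (v, u).

Definition has_clique (V : finType) (m : nat) (ends : 'I_m -> V * V) (k : nat) : Prop :=
  exists Q : {set V}, #|Q| = k /\ {in Q &, forall u v, u != v -> adj ends u v}.

Section Construction.
Variables (V : finType) (m : nat) (ends : 'I_m -> V * V) (k : nat).

Definition Kc := 'C(k, 2).
Definition kp := 2 * Kc + k + 1.
Definition kappa := Kc + k + 3.
Definition tau := (2 * m * kappa).+1.
Definition ell := 2.

(* Vertex set V' :
   V  +  E (as 'I_m)  +  U^1..U^(kappa+1) (t : 'I_kappa.+1, x : 'I_Kc  ~ u^(t+1)_(x+1))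
   +  C (c : 'I_tau  ~ c_(c+1))
   +  leaves of the star at c_(2j+1), j : 'I_(m*kappa).+1
   +  leaves of the star at u^(j+1)_(x+1), j : 'I_kappa.+1, x : 'I_Kc *)
Definition vertT : finType :=
  (V + 'I_m + ('I_kappa.+1 * 'I_Kc) + 'I_tau
     + ('I_(m * kappa).+1 * 'I_kp.+1)
     + ('I_kappa.+1 * 'I_Kc * 'I_kp.+1))%type.

Definition vV (v : V) : vertT := inl (inl (inl (inl (inl v)))).
Definition vE (i : 'I_m) : vertT := inl (inl (inl (inl (inr i)))).
Definition vU (t : 'I_kappa.+1) (x : 'I_Kc) : vertT := inl (inl (inl (inr (t, x)))).
Definition vC (c : 'I_tau) : vertT := inl (inl (inr c)).
Definition vLC (j : 'I_(m * kappa).+1) (y : 'I_kp.+1) : vertT := inl (inr (j, y)).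
Definition vLU (j : 'I_kappa.+1) (x : 'I_Kc) (y : 'I_kp.+1) : vertT := inr (j, x, y).

(* c_n for 1 <= n <= tau *)
Definition cv (n : nat) : vertT := vC (inord n.-1).

(* directed version of the edges of layer G_i (i is 1-based) *)
Definition base_edge (i : nat) (a b : vertT) : Prop :=
  (* (1) star at c_i, i odd *)
  (exists (j : 'I_(m * kappa).+1) (y : 'I_kp.+1),
      i = 2 * j + 1 /\ a = cv i /\ b = vLC j y) \/
  (* (2) in G_(2mj+1) each vertex of U^(j+1) is the center of a star *)
  (exists (j : 'I_kappa.+1) (x : 'I_Kc) (y : 'I_kp.+1),
      i = 2 * m * j + 1 /\ a = vU j x /\ b = vLU j x y) \/
  (* (3) u^(j+1)_x -- u^(j+2)_x in G_(2mj+ii), 1 <= ii <= 2m+1, j < kappa *)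
  (exists (j : 'I_kappa.+1) (x : 'I_Kc) (ii : nat),
      j < kappa /\ 1 <= ii <= 2 * m + 1 /\ i = 2 * m * j + ii /\
      a = vU j x /\ b = vU (inord j.+1) x) \/
  (* (4) edge c_ii -- c_(ii+1) in G_ii and G_(ii+1), ii even, ii <= tau - 1 *)
  (exists ii : nat,
      ~~ odd ii /\ 1 <= ii <= tau - 1 /\ (i = ii \/ i = ii.+1) /\
      a = cv ii /\ b = cv ii.+1) \/
  (* (5) in G_(2mj+2(ii+1)), c_(2mj+2(ii+1)) adjacent to e_(ii+1) and its endpoints *)
  (exists (j : nat) (ii : 'I_m),
      j < kappa /\ i = 2 * m * j + 2 * ii.+1 /\ a = cv i /\
      (b = vE ii \/ b = vV (ends ii).1 \/ b = vV (ends ii).2)).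

Definition layer_edge (i : nat) (a b : vertT) : Prop :=
  base_edge i a b \/ base_edge i b a.

End Construction.

(* Main.v *)
Require Import Defs.
From mathcomp Require Import all_boot zify.
Set Implicit Arguments. Unset Strict Implicit. Unset Printing Implicit Defensive.

Lemma card_count_enum (n : nat) (J : {set 'I_n}) : #|J| = count (mem J) (enum 'I_n).
Proof.
rewrite cardE /enum_mem size_filter -enumT; congr count; symmetry.
by apply/all_filterP/allP.
Qed.

Lemma sub_card_ex (T : finType) (A : {set T}) n : n <= #|A| ->
  exists B : {set T}, B \subset A /\ #|B| = n.
Proof.
elim: n => [|n IH] H; first by exists set0; rewrite sub0set cards0.
have [B [BA cB]] := IH (ltnW H).
have : B \proper A by rewrite properEcard BA cB.
case/properP => _ [x xA xB].
exists (x |: B); split; first by rewrite subUset sub1set xA.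
by rewrite cardsU1 xB cB.
Qed.

Lemma divmodP (M j r : nat) : r < M -> (j * M + r) %/ M = j /\ (j * M + r) %% M = r.
Proof.
move=> rM; have M0 : 0 < M by lia.
by rewrite divnMDl // modnMDl divn_small // modn_small // addn0; split.

Qed.

Lemma symdiff_le2 (T : finType) (A B D : {set T}) :
  symdiff A B \subset D -> #|D| <= 2 -> #|symdiff A B| <= 2.
Proof. move=> /subset_leq_card; lia. Qed.

Section Sol.
Variables (V : finType) (m : nat) (ends : 'I_m -> V * V) (k : nat).
Variables (Q : {set V}) (J : {set 'I_m}).
Hypothesis HJQ : forall i, i \in J -> ((ends i).1 \in Q) && ((ends i).2 \in Q).
Hypothesis HJK : #|J| = Kc k.
Hypothesis HQ : #|Q| = k.

Local Notation T := (vertT V m k).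
Local Notation M := (2 * m).

Definition inJ (t : nat) : bool := [exists i in J, val i == t].
Definition cnt (t : nat) : nat := count inJ (iota 0 t).
Definition Uset (j a : nat) : {set T} :=
  [set vU V m (inord (j + (x < a))) x | x : 'I_(Kc k)].
Definition Base : {set T} := vV m k @: Q :|: vE V k @: J.
Definition cq (q : nat) : T :=
  if ~~ odd q then cv V m k q.+1
  else if inJ ((q %% M)./2) then cv V m k q.+2 else cv V m k q.+1.
Definition Sq (q : nat) : {set T} :=
  Base :|: [set cq q] :|: Uset (q %/ M) (cnt ((q %% M)./2)).

Lemma inJP (i : 'I_m) : inJ i = (i \in J).
Proof.
apply/existsP/idP => [[i0 /andP [H /eqP E]]|H]; last by exists i; rewrite H eqxx.
by have -> : i = i0 by apply: val_inj.
Qed.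

Lemma cnt0 : cnt 0 = 0. Proof. by []. Qed.
Lemma cntS t : cnt t.+1 = cnt t + inJ t.
Proof. by rewrite /cnt -addn1 iotaD count_cat /= addn0 add0n. Qed.
Lemma cntm : cnt m = Kc k.
Proof.
rewrite /cnt -val_enum_ord count_map -HJK card_count_enum.
by apply: eq_count => i /=; rewrite inJP.
Qed.

Lemma K_m : 0 < Kc k -> 0 < m.
Proof.
rewrite -HJK => /card_gt0P [i _]; by case: i => i /= ?; lia.
Qed.

Lemma size_Sq q : #|Sq q| <= kp k.
Proof.
rewrite /Sq /kp.
apply: (leq_trans (leq_card_setU _ _)).
have h1 : #|Base| <= k + Kc k.
  apply: (leq_trans (leq_card_setU _ _)).
  have := leq_imset_card (vV m k) Q; have := leq_imset_card (vE V k) J.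
  by move=> a b; apply: (leq_trans (leq_add b a)); rewrite HQ HJK.
have h2 : #|Uset (q %/ M) (cnt ((q %% M)./2))| <= Kc k.
  rewrite /Uset; apply: (leq_trans (leq_imset_card _ _)); by rewrite card_ord.
have h3 : #|Base :|: [set cq q]| <= k + Kc k + 1.
  apply: (leq_trans (leq_card_setU _ _)); rewrite cards1; exact: leq_add h1 (leqnn 1).
apply: (leq_trans (leq_add h3 h2)); lia.
Qed.


Lemma SqB q z : z \in Base -> z \in Sq q.
Proof. by rewrite /Sq => h; apply/setUP; left; apply/setUP; left. Qed.
Lemma SqC q : cq q \in Sq q.
Proof. by rewrite /Sq; apply/setUP; left; apply/setUP; right; rewrite set11. Qed.
Lemma SqU q j r (x : 'I_(Kc k)) : q %/ M = j -> q %% M = r ->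
  vU V m (inord (j + (x < cnt (r./2)))) x \in Sq q.
Proof.
move=> <- <-; rewrite /Sq in_setU; apply/orP; right.
by apply/imsetP; exists x.
Qed.
Lemma BaseV v : v \in Q -> vV m k v \in Base.
Proof. by move=> h; rewrite /Base in_setU imset_f. Qed.
Lemma BaseE i : i \in J -> vE V k i \in Base.
Proof. by move=> h; rewrite /Base in_setU imset_f ?orbT. Qed.

Lemma mpos_of (x : 'I_(Kc k)) : 0 < m.
Proof. apply: K_m; case: x => /= x; lia. Qed.

Lemma coverL q a b : base_edge ends q.+1 a b -> a \in Sq q \/ b \in Sq q.
Proof.
case=> [[j [y [Hi [-> ->]]]]|[[j [x [y [Hi [-> ->]]]]]|[[j [x [ii [Hj [Hii [Hi [-> ->]]]]]]]|[[ii [Hev [Hii [Hi [-> ->]]]]]|[j [ii [Hj [Hi [-> Hb]]]]]]]]].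
- left.
  have -> : cv V m k q.+1 = cq q.
    rewrite /cq; have -> : q = 2 * j by lia.
    by rewrite oddM.
  exact: SqC.
- left; have mp := mpos_of x.
  have [D1 D2] := @divmodP M j 0 ltac:(lia).
  have E : q = j * M + 0 by lia.
  have := @SqU q j 0 x; rewrite E D1 D2 => /(_ erefl erefl).
  by rewrite cnt0 ltn0 /= addn0 inord_val.
- have mp := mpos_of x.
  case: (ltnP ii.-1 M) => hlt.
  + have [D1 D2] := @divmodP M j ii.-1 hlt.
    have E : q = j * M + ii.-1 by lia.
    have := @SqU q j ii.-1 x; rewrite E D1 D2 => /(_ erefl erefl).
    case: (x < _) => /=; first by rewrite addn1; right.
    by rewrite addn0 inord_val; left.
  + have [D1 D2] := @divmodP M j.+1 0 ltac:(lia).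
    have E : q = j.+1 * M + 0 by lia.
    have := @SqU q j.+1 0 x; rewrite E D1 D2 => /(_ erefl erefl).
    by rewrite cnt0 ltn0 /= addn0; right.
- case: Hi => Hi.
  + rewrite -Hi; rewrite -Hi in Hev.
    have Hodd : odd q by move: Hev => /=; case: (odd q).
    have := SqC q; rewrite /cq Hodd /=.
    by case: (inJ _) => h; [right|left].
  + have Eq : q = ii by lia.
    subst q; right; have := SqC ii; by rewrite /cq Hev.
- have hii := ltn_ord ii.
  have mp : 0 < m by lia.
  have hlt : 2 * ii.+1 - 1 < M by lia.
  have [D1 D2] := @divmodP M j _ hlt.
  have E : q = j * M + (2 * ii.+1 - 1) by lia.
  have Eh : (2 * ii.+1 - 1)./2 = ii.
    have -> : 2 * ii.+1 - 1 = (ii : nat).*2.+1 by rewrite -addnn; lia.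
    by rewrite /= uphalf_double.
  have Hodd : odd q.
    have -> : q = (j * m + ii).*2.+1 by rewrite -addnn; lia.
    by rewrite /= odd_double.
  have := SqC q; rewrite /cq Hodd /=.
  have -> : (q %% M)./2 = ii by rewrite E D2 Eh.
  case: ifP => hJ; last by left.
  move=> _; right; apply: SqB.
  have iJ : ii \in J by rewrite -inJP.
  have /andP [h1 h2] := HJQ iJ.
  case: Hb => [->|[->|->]]; [exact: BaseE|exact: BaseV|exact: BaseV].
Qed.

Definition Uq q := Uset (q %/ M) (cnt ((q %% M)./2)).

Lemma symdiff_sub (X U1 U2 : {set T}) :
  symdiff (X :|: U1) (X :|: U2) \subset symdiff U1 U2.
Proof.
apply/subsetP => z; rewrite /symdiff !in_setU !in_setD !in_setU.
by case: (z \in X); case: (z \in U1); case: (z \in U2).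
Qed.

Lemma L_A q q' : Uq q = Uq q' -> #|symdiff (Sq q) (Sq q')| <= 2.
Proof.
move=> E; apply: (@symdiff_le2 _ _ _ [set cq q; cq q']); last first.
  by rewrite cards2; case: (_ != _).
apply/subsetP => z; rewrite /Sq -/(Uq q) -/(Uq q') E.
move: Base (cq q) (cq q') (Uq q') => B c1 c2 U.
rewrite /symdiff !in_setU !in_setD !in_setU !in_set1.
by case: (z \in B); case: (z \in U); case: (z == c1); case: (z == c2).
Qed.

Lemma Usym j a : #|symdiff (Uset j a) (Uset j a.+1)| <= 2.
Proof.
set X := [set x : 'I_(Kc k) | val x == a].
have cX : #|X| <= 1.
  apply/card_le1_eqP => x y; rewrite !inE => /eqP hx /eqP hy.
  by apply: val_inj; rewrite hx hy.
apply: (@symdiff_le2 _ _ _ ((fun x => vU V m (inord j) x) @: X :|: (fun x => vU V m (inord j.+1) x) @: X)); last first.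
  apply: (leq_trans (leq_card_setU _ _)).
  have h1 := leq_imset_card (fun x => vU V m (inord j) x) X.
  have h2 := leq_imset_card (fun x => vU V m (inord j.+1) x) X.
  by apply: (leq_trans (leq_add h1 h2)); lia.
apply/subsetP => z; rewrite /symdiff in_setU => /orP [] /setDP [].
- move=> /imsetP [x _ ->] hn.
  case: (eqVneq (x : nat) a) => hx.
    apply/setUP; left; apply/imsetP; exists x; first by rewrite inE; apply/eqP.
    by rewrite hx ltnn /= addn0.
  exfalso; move/negP: hn; apply; apply/imsetP; exists x => //.
  by rewrite [in RHS]ltnS [in RHS]leq_eqVlt (negbTE hx).
- move=> /imsetP [x _ ->] hn.
  case: (eqVneq (x : nat) a) => hx.
    apply/setUP; right; apply/imsetP; exists x; first by rewrite inE; apply/eqP.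
    by rewrite hx ltnS leqnn /= addn1.
  exfalso; move/negP: hn; apply; apply/imsetP; exists x => //.
  by rewrite [in LHS]ltnS [in LHS]leq_eqVlt (negbTE hx).
Qed.

Lemma L_B q q' j a : cq q = cq q' -> Uq q = Uset j a -> Uq q' = Uset j a.+1 ->
  #|symdiff (Sq q) (Sq q')| <= 2.
Proof.
move=> Ec E1 E2; rewrite /Sq -/(Uq q) -/(Uq q') Ec E1 E2.
apply: leq_trans (Usym j a); apply: subset_leq_card; exact: symdiff_sub.
Qed.

Lemma UsetK j : Uset j (Kc k) = Uset j.+1 0.
Proof.
apply: eq_imset => x; by rewrite ltn_ord ltn0 /= addn0 addn1.
Qed.

Lemma transL q : q < M * kappa k -> #|symdiff (Sq q) (Sq q.+1)| <= 2.
Proof.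
move=> hq.
have mp : 0 < m.
  case: (posnP m) => // m0; by rewrite m0 muln0 mul0n in hq.
have Mp : 0 < M by lia.
set j := q %/ M; set p := q %% M.
have hp : p < M by rewrite ltn_pmod.
have Eq : q = j * M + p by rewrite /j /p -divn_eq.
have Hodd : odd q = odd p by rewrite Eq oddD oddM oddM /= andbF.
have hh : (p.+1)./2 = odd p + p./2 := uphalf_half p.
have Uqq : Uq q = Uset j (cnt p./2) by [].
have cqq : cq q = if ~~ odd p then cv V m k q.+1
   else if inJ p./2 then cv V m k q.+2 else cv V m k q.+1 by rewrite /cq Hodd.
case: (ltnP p.+1 M) => hp1.
- have [D1 D2] := @divmodP M j p.+1 hp1.
  have Eq1 : q.+1 = j * M + p.+1 by lia.
  have Uq1 : Uq q.+1 = Uset j (cnt (p.+1)./2) by rewrite /Uq Eq1 D1 D2.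
  case: (boolP (odd p)) => op.
  + have cq1 : cq q.+1 = cv V m k q.+2 by rewrite /cq /= Hodd op.
    rewrite op /= in cqq.
    rewrite hh op add1n cntS in Uq1.
    case: (boolP (inJ p./2)) => ij.
    * rewrite ij /= in cqq; rewrite ij addn1 in Uq1.
      apply: (L_B (j := j) (a := cnt p./2)) => //; by rewrite cqq cq1.
    * rewrite (negbTE ij) /= in cqq; rewrite (negbTE ij) addn0 in Uq1.
      by apply: L_A; rewrite Uqq Uq1.
  + rewrite hh (negbTE op) add0n in Uq1.
    by apply: L_A; rewrite Uqq Uq1.
- have hpM : p.+1 = M by lia.
  have jk : j.+1 * M + 0 = q.+1 by rewrite Eq; lia.
  have [D1 D2] := @divmodP M j.+1 0 Mp.
  have Uq1 : Uq q.+1 = Uset j.+1 0 by rewrite /Uq -jk D1 D2.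
  have op : odd p.
    have : ~~ odd p.+1 by rewrite hpM oddM.
    by rewrite /=; case: (odd p).
  have hm : (p./2).+1 = m.
    have : (p.+1)./2 = m by rewrite hpM mul2n doubleK.
    by rewrite hh op add1n.
  have cK : cnt p./2 + inJ p./2 = Kc k by rewrite -cntS hm cntm.
  have cq1 : cq q.+1 = cv V m k q.+2.
    by rewrite /cq /= Hodd op.
  rewrite op /= in cqq.
  case: (boolP (inJ p./2)) => ij.
  + rewrite ij /= in cqq; rewrite ij addn1 in cK.
    apply: (L_B (j := j) (a := cnt p./2)) => //; first by rewrite cqq cq1.
    by rewrite Uq1 cK UsetK.
  + rewrite (negbTE ij) /= in cqq; rewrite (negbTE ij) addn0 in cK.
    by apply: L_A; rewrite Uqq Uq1 cK UsetK.
Qed.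

End Sol.

Theorem lemma18 (V : finType) (m : nat) (ends : 'I_m -> V * V) (k : nat) :
  simple_edges ends -> 0 < k ->
  has_clique ends k ->
  mvc_yes (tau m k) (@layer_edge V m ends k) (kp k) ell.
Proof.
move=> _ _ [Q [HQ Hadj]].
set CI := [set i : 'I_m | ((ends i).1 \in Q) && ((ends i).2 \in Q)].
have hCI : Kc k <= #|CI|.
  rewrite /Kc -HQ -cards_draws.
  set f := fun i : 'I_m => [set (ends i).1; (ends i).2].
  apply: (leq_trans _ (leq_imset_card f CI)); apply: subset_leq_card.
  apply/subsetP => A; rewrite inE => /andP [AQ /cards2P [u [v [uv EA]]]].
  have uQ : u \in Q by apply: (subsetP AQ); rewrite EA !inE eqxx.
  have vQ : v \in Q by apply: (subsetP AQ); rewrite EA !inE eqxx orbT.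
  have [i Hi] := Hadj u v uQ vQ uv.
  apply/imsetP; exists i.
    by rewrite inE; case: Hi => ->; rewrite /= ?uQ ?vQ.
  by rewrite /f EA; case: Hi => -> //=; rewrite setUC.
have [J [JCI HJK]] := sub_card_ex hCI.
have HJQ : forall i, i \in J -> ((ends i).1 \in Q) && ((ends i).2 \in Q).
  by move=> i /(subsetP JCI); rewrite inE.
exists (fun i => Sq k Q J i.-1); split.
- move=> i /andP [i1 _]; split; last exact: size_Sq.
  move=> a b; have Ei : i = (i.-1).+1 by lia.
  move=> H; rewrite /layer_edge Ei in H; case: H => H.
  + exact: (coverL HJQ HJK HQ H).
  + by case: (coverL HJQ HJK HQ H) => h; [right|left].
- move=> i /andP [i1 it] /=.
  have Ei : i = (i.-1).+1 by lia.
  rewrite {2}Ei; apply: (transL HJK HQ).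
  rewrite /tau in it; lia.
Qed.
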